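(* Let $A$ be an evolution algebra with natural basis $B=\{e_i:i\in\Lambda\}$, and let $J$ be a non-zero ideal of $A$ with support $\Lambda_J$. Then $I_1=\mathrm{lin}\{e_i^2:i\in\Lambda_J\cup D(\Lambda_J)\}$ and $I_2=\mathrm{lin}\{e_i:i\in\Lambda_J\cup D(\Lambda_J)\}$ are ideals of $A$ and $I_1\subseteq J\subseteq I_2$. Moreover, if $\dim A<\infty$ and $\det M_B(A)\neq0$, then $I_1=J=I_2$.
   Context: An evolution algebra is an algebra $A$ over $\mathbb{K}\in\{\mathbb{R},\mathbb{C}\}$ with a basis $\{e_i:i\in\Lambda\}$ (natural basis) with $e_ie_j=0$ for $i\neq j$; write $e_i^2=\sum_k\omega_{ki}e_k$ and $M_B(A)=(\omega_{ki})$. Support: $\Lambda_a=\{i:\alpha_i\neq0\}$ for $a=\sum\alpha_ie_i$, $\Lambda_S=\bigcup_{a\in S}\Lambda_a$. Descendents: $D^1(i)=\{j:\omega_{ji}\neq0\}$, $D^n(i)=\bigcup_{j\in D^{n-1}(i)}D^1(j)$, $D(i)=\bigcup_{n\ge1}D^n(i)$, $D(\Lambda_0)=\bigcup_{i\in\Lambda_0}D(i)$. *)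

(* Defs.v *)
From HB Require Import structures.
From mathcomp Require Import all_boot all_order all_algebra.
Set Implicit Arguments. Unset Strict Implicit. Unset Printing Implicit Defensive.
Import Order.TTheory GRing.Theory Num.Theory.
Local Open Scope ring_scope.

(* Subsets of A (possibly infinite-dimensional) are predicates A -> Prop. *)

Definition lincomb (K : fieldType) (A : lmodType K) (L : eqType)
  (f : L -> A) (s : seq L) (c : L -> K) : A := \sum_(i <- s) c i *: f i.

Definition lin (K : fieldType) (A : lmodType K) (L : eqType)
  (f : L -> A) (X : L -> Prop) : A -> Prop :=
  fun x => exists (s : seq L) (c : L -> K),
    (forall i, i \in s -> X i) /\ x = lincomb f s c.

Definition is_basis (K : fieldType) (A : lmodType K) (L : eqType) (e : L -> A) : Prop :=
  (forall x : A, exists (s : seq L) (c : L -> K), x = lincomb e s c) /\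
  (forall (s : seq L) (c : L -> K), uniq s -> lincomb e s c = 0 ->
      forall i, i \in s -> c i = 0).

Definition bilinear_mul (K : fieldType) (A : lmodType K) (mul : A -> A -> A) : Prop :=
  (forall x y z, mul (x + y) z = mul x z + mul y z) /\
  (forall x y z, mul x (y + z) = mul x y + mul x z) /\
  (forall (a : K) x y, mul (a *: x) y = a *: mul x y) /\
  (forall (a : K) x y, mul x (a *: y) = a *: mul x y).

Definition natural_basis (K : fieldType) (A : lmodType K) (L : eqType)
  (mul : A -> A -> A) (e : L -> A) (omega : L -> L -> K) : Prop :=
  is_basis e /\
  (forall i j, i != j -> mul (e i) (e j) = 0) /\
  (forall i, exists s : seq L, uniq s /\ (forall k, omega k i != 0 -> k \in s) /\
      mul (e i) (e i) = lincomb e s (fun k => omega k i)).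

Definition supp (K : fieldType) (A : lmodType K) (L : eqType)
  (e : L -> A) (a : A) (i : L) : Prop :=
  exists (s : seq L) (c : L -> K),
    uniq s /\ a = lincomb e s c /\ i \in s /\ c i != 0.

Definition suppS (K : fieldType) (A : lmodType K) (L : eqType)
  (e : L -> A) (S : A -> Prop) (i : L) : Prop :=
  exists a, S a /\ supp e a i.

Definition D1 (K : fieldType) (L : eqType) (omega : L -> L -> K) (i j : L) : Prop :=
  omega j i != 0.

Fixpoint descn (K : fieldType) (L : eqType) (omega : L -> L -> K) (n : nat) (i j : L)
  : Prop :=
  match n with
  | 0 => i = j
  | n'.+1 => exists k, descn omega n' i k /\ D1 omega k j
  end.

Definition desc (K : fieldType) (L : eqType) (omega : L -> L -> K) (i j : L) : Prop :=
  exists n, (0 < n)%N /\ descn omega n i j.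

Definition descS (K : fieldType) (L : eqType) (omega : L -> L -> K) (X : L -> Prop)
  (j : L) : Prop := exists i, X i /\ desc omega i j.

Definition is_ideal (K : fieldType) (A : lmodType K) (mul : A -> A -> A)
  (J : A -> Prop) : Prop :=
  J 0 /\ (forall x y, J x -> J y -> J (x + y)) /\
  (forall (a : K) x, J x -> J (a *: x)) /\
  (forall x y, J x -> J (mul x y)) /\ (forall x y, J x -> J (mul y x)).

Definition struct_mx (K : fieldType) (L : eqType) (omega : L -> L -> K) (s : seq L)
  : 'M[K]_(size s) :=
  \matrix_(p < size s, q < size s) omega (tnth (in_tuple s) p) (tnth (in_tuple s) q).

(* Main.v *)
Require Import Defs.
From HB Require Import structures.
From mathcomp Require Import all_boot all_order all_algebra.
From Stdlib Require Import ClassicalEpsilon.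
Import Order.TTheory GRing.Theory Num.Theory.
Set Implicit Arguments. Unset Strict Implicit.
Local Open Scope ring_scope.

Section Helpers.
Variables (K : fieldType) (A : lmodType K).

Definition closedP (P : A -> Prop) :=
  P 0 /\ (forall x y, P x -> P y -> P (x + y)) /\ (forall (a : K) x, P x -> P (a *: x)).

Lemma closed_sum (P : A -> Prop) (I : Type) (r : seq I) (Q : pred I) (F : I -> A) :
  closedP P -> (forall i, Q i -> P (F i)) -> P (\sum_(i <- r | Q i) F i).
Proof. by move=> [P0 [PD _]] H; apply: big_ind. Qed.

Lemma lincomb_undup (L : eqType) (f : L -> A) s c :
  lincomb f s c = lincomb f (undup s) (fun i => (count_mem i s)%:R * c i).
Proof.
rewrite /lincomb -big_undup_iterop_count; apply: eq_bigr => i _.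
rewrite Monoid.iteropE -scalerA scaler_nat; elim: (count_mem i s) => //= n ->.
by rewrite mulrS.
Qed.

Lemma sum_sub (L : eqType) (s u : seq L) (F : L -> A) :
  uniq s -> uniq u -> {subset s <= u} ->
  \sum_(i <- u) (if i \in s then F i else 0) = \sum_(i <- s) F i.
Proof.
move=> us uu su; rewrite -big_mkcond -big_filter; apply: perm_big.
apply: uniq_perm; first exact: filter_uniq.
  by [].
by move=> i; rewrite mem_filter; case: (boolP (i \in s)) => //= /su ->.
Qed.

Lemma lin_closed (L : eqType) (f : L -> A) (X : L -> Prop) : closedP (lin f X).
Proof.
split; first by exists [::], (fun _ => 0); split => //; rewrite /lincomb big_nil.
split.
- move=> x y [s [c [Hs ->]]] [t [d [Ht ->]]].
  rewrite (lincomb_undup f s) (lincomb_undup f t).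
  set c' := (fun i => _ * c i); set d' := (fun i => _ * d i).
  exists (undup (undup s ++ undup t)),
    (fun i => (if i \in undup s then c' i else 0) + (if i \in undup t then d' i else 0)).
  split.
    by move=> i; rewrite mem_undup mem_cat !mem_undup => /orP [/Hs|/Ht].
  rewrite /lincomb.
  under [RHS]eq_bigr => i _ do rewrite scalerDl (fun_if (fun a => a *: f i))
     (fun_if (fun a => a *: f i)) !scale0r.
  rewrite big_split /= !sum_sub ?undup_uniq // => i Hi;
  by rewrite mem_undup mem_cat Hi ?orbT.
- move=> a x [s [c [Hs ->]]]; exists s, (fun i => a * c i); split => //.
  by rewrite /lincomb scaler_sumr; apply: eq_bigr => i _; rewrite scalerA.
Qed.

Lemma lin_gen (L : eqType) (f : L -> A) (X : L -> Prop) i : X i -> lin f X (f i).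
Proof.
move=> Xi; exists [:: i], (fun _ => 1); split; first by move=> j; rewrite inE => /eqP ->.
by rewrite /lincomb big_seq1 scale1r.
Qed.

Lemma lincomb_closed (L : eqType) (P : A -> Prop) (f : L -> A) s c :
  closedP P -> (forall i, i \in s -> P (c i *: f i)) -> P (lincomb f s c).
Proof.
move=> cP H; rewrite /lincomb big_seq; exact: closed_sum.
Qed.

End Helpers.
Section Alg.
Variables (K : fieldType) (A : lmodType K) (L : eqType)
  (mul : A -> A -> A) (e : L -> A) (omega : L -> L -> K).
Hypothesis hbil : bilinear_mul mul.
Hypothesis hnat : natural_basis mul e omega.

Lemma scale_gen (P : A -> Prop) (a : K) v : closedP P -> (a != 0 -> P v) -> P (a *: v).
Proof.
move=> [P0 [_ PZ]] H; case: (eqVneq a 0) => [->|/H]; first by rewrite scale0r.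
exact: PZ.
Qed.

Lemma bmul0l y : mul 0 y = 0.
Proof. have [_ [_ [H _]]] := hbil; by have := H 0 0 y; rewrite !scale0r. Qed.
Lemma bmul0r y : mul y 0 = 0.
Proof. have [_ [_ [_ H]]] := hbil; by have := H 0 y 0; rewrite !scale0r. Qed.

Lemma mul_lincomb_l (f : L -> A) s c y :
  mul (lincomb f s c) y = lincomb (fun i => mul (f i) y) s c.
Proof.
have [HD [_ [HZ _]]] := hbil.
rewrite /lincomb; elim: s => [|i s IH]; first by rewrite !big_nil bmul0l.
by rewrite !big_cons HD HZ IH.
Qed.

Lemma mul_lincomb_r (f : L -> A) s c y :
  mul y (lincomb f s c) = lincomb (fun i => mul y (f i)) s c.
Proof.
have [_ [HD [_ HZ]]] := hbil.
rewrite /lincomb; elim: s => [|i s IH]; first by rewrite !big_nil bmul0r.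
by rewrite !big_cons HD HZ IH.
Qed.

Lemma mul_e_l t c j : uniq t ->
  mul (lincomb e t c) (e j) = (if j \in t then c j else 0) *: mul (e j) (e j).
Proof.
have [_ [Hne _]] := hnat.
move=> ut; rewrite mul_lincomb_l /lincomb; case: ifP => jt.
  rewrite (bigD1_seq j) //= big1 ?addr0 // => k /negbTE kj.
  by rewrite Hne ?kj // scaler0.
rewrite scale0r big1_seq // => k /andP[_ kt]; rewrite Hne ?scaler0 //.
by apply/eqP => kj; rewrite -kj kt in jt.
Qed.

Lemma mul_e_r t c j : uniq t ->
  mul (e j) (lincomb e t c) = (if j \in t then c j else 0) *: mul (e j) (e j).
Proof.
have [_ [Hne _]] := hnat.
move=> ut; rewrite mul_lincomb_r /lincomb; case: ifP => jt.
  rewrite (bigD1_seq j) //= big1 ?addr0 // => k /negbTE kj.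
  by rewrite Hne ?scaler0 // eq_sym kj.
rewrite scale0r big1_seq // => k /andP[_ kt]; rewrite Hne ?scaler0 //.
by apply/eqP => kj; rewrite kj kt in jt.
Qed.

Lemma mul_sq_l k j : mul (mul (e k) (e k)) (e j) = omega j k *: mul (e j) (e j).
Proof.
have [_ [_ Hsq]] := hnat.
have [sk [uk [Hk ->]]] := Hsq k.
rewrite mul_e_l //; case: ifP => // jk.
by have /eqP-> : omega j k == 0 by apply: contraFT jk => /Hk.
Qed.

Lemma mul_sq_r k j : mul (e j) (mul (e k) (e k)) = omega j k *: mul (e j) (e j).
Proof.
have [_ [_ Hsq]] := hnat.
have [sk [uk [Hk ->]]] := Hsq k.
rewrite mul_e_r //; case: ifP => // jk.
by have /eqP-> : omega j k == 0 by apply: contraFT jk => /Hk.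
Qed.

Lemma ideal_of (g : L -> A) (X : L -> Prop) :
  (forall i j, X i -> lin g X (mul (g i) (e j)) /\ lin g X (mul (e j) (g i))) ->
  is_ideal mul (lin g X).
Proof.
move=> H; have cl := lin_closed g X; have [c0 [cD cZ]] := cl.
have [[Hb _] _] := hnat.
split=> //; split=> //; split=> //; split.
- move=> x y [s [c [Hs ->]]]; have [t [d ->]] := Hb y.
  rewrite mul_lincomb_l; apply: lincomb_closed => // i /Hs Xi; apply: (cZ).
  rewrite mul_lincomb_r; apply: lincomb_closed => // j _; apply: (cZ).
  by case: (H i j Xi).
- move=> x y [s [c [Hs ->]]]; have [t [d ->]] := Hb y.
  rewrite mul_lincomb_r; apply: lincomb_closed => // i /Hs Xi; apply: (cZ).
  rewrite mul_lincomb_l; apply: lincomb_closed => // j _; apply: (cZ).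
  by case: (H i j Xi).
Qed.

End Alg.
Section Key.
Variables (K : fieldType) (A : lmodType K) (L : eqType)
  (mul : A -> A -> A) (e : L -> A) (omega : L -> L -> K).
Hypothesis hbil : bilinear_mul mul.
Hypothesis hnat : natural_basis mul e omega.

Lemma sum_s (F : L -> A) (s : seq L) :
  \sum_(k <- s) F k = \sum_(p < size s) F (tnth (in_tuple s) p).
Proof. exact: (big_tuple 0 +%R (in_tuple s) xpredT F). Qed.

Lemma sq_sum (s : seq L) j : uniq s -> (forall i, i \in s) ->
  \sum_(k <- s) omega k j *: e k = mul (e j) (e j).
Proof.
move=> us alls; have [_ [_ Hsq]] := hnat.
have [sj [uj [Hj ->]]] := Hsq j. rewrite /lincomb. rewrite -(sum_sub _ uj us) //.
apply: eq_bigr => k _; case: ifP => // kj.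
have /eqP-> : omega k j == 0 by apply: contraFT kj => /Hj.
by rewrite scale0r.
Qed.

Lemma key (X : L -> Prop) (s : seq L) :
  (forall i j, X i -> omega j i != 0 -> X j) ->
  uniq s -> (forall i, i \in s) -> \det (struct_mx omega s) != 0 ->
  forall i, X i -> lin (fun i => mul (e i) (e i)) X (e i).
Proof.
move=> Xcl us alls hdet i Xi.
pose n := size s.
pose sg (q : 'I_n) := tnth (in_tuple s) q.
pose xb j := if excluded_middle_informative (X j) then true else false.
have xbP j : xb j -> X j by rewrite /xb; case: excluded_middle_informative.
have xbT j : X j -> xb j by rewrite /xb; case: excluded_middle_informative.
pose d : 'rV[K]_n := \row_q (xb (sg q))%:R.
pose D := diag_mx d.
pose N := (struct_mx omega s)^T.
have Nunit : N \in unitmx by rewrite unitmxE det_tr unitfE.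
have DN : D *m N = D *m N *m D.
{ apply/matrixP => q p; rewrite mul_mx_diag mul_diag_mx !mxE.
  case: (boolP (xb (sg q))) => xq /=; last by rewrite !mul0r.
  case: (boolP (xb (sg p))) => xp /=; first by rewrite mulr1.
  rewrite mulr0; have : omega (sg p) (sg q) == 0.
    by apply: contraNT xp => /(Xcl _ _ (xbP _ xq)) /xbT.
  by move=> /eqP ->; rewrite mulr0. }
have sub1 : (D *m N <= D)%MS by rewrite DN submxMl.
have rk : \rank (D *m N) = \rank D by rewrite mxrankMfree // row_free_unit.
have sub2 : (D <= D *m N)%MS.
{ have [_] := mxrank_leqif_eq sub1; rewrite rk eqxx => /esym /andP [] //. }
have ik : (index i s < n)%N by rewrite index_mem.
pose k := Ordinal ik.
have sgk : sg k = i by rewrite /sg (tnth_nth i) /= nth_index.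
have dk : ((delta_mx 0 k : 'rV[K]_n) <= D)%MS.
{ have -> : (delta_mx 0 k : 'rV[K]_n) = delta_mx 0 k *m D.
  { apply/matrixP => a b; rewrite mul_mx_diag !mxE.
    case: (eqVneq b k) => [->|bk]; first by rewrite sgk xbT //= mulr1.
    by rewrite andbF mul0r. }
  exact: submxMl. }
have [v Hv] := submxP (submx_trans dk sub2).
pose phi (u : 'rV[K]_n) := \sum_(p < n) u 0 p *: e (sg p).
have phid : phi (delta_mx 0 k) = e i.
{ rewrite /phi (bigD1 k) //= big1 => [|p pk]; first by rewrite !mxE !eqxx /= scale1r addr0 sgk.
  by rewrite !mxE (negbTE pk) andbF scale0r. }
have phiN w : phi (w *m N) = \sum_(q < n) w 0 q *: mul (e (sg q)) (e (sg q)).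
{ rewrite /phi; under eq_bigr => p _ do rewrite mxE scaler_suml.
  rewrite exchange_big; apply: eq_bigr => q _.
  under eq_bigr => p _ do rewrite -scalerA.
  rewrite -scaler_sumr; congr (_ *: _).
  rewrite -(sq_sum _ us alls) sum_s; apply: eq_bigr => p _.
  by rewrite !mxE. }
rewrite -phid Hv mulmxA phiN.
apply: closed_sum; first exact: lin_closed.
move=> q _; apply: scale_gen; first exact: lin_closed.
rewrite mul_mx_diag !mxE; case: (boolP (xb (sg q))) => [/xbP Xq _ | _]; last by rewrite mulr0 eqxx.
exact: (lin_gen (fun i => mul (e i) (e i))).
Qed.

End Key.

Theorem proposition5p6 (K : fieldType) (A : lmodType K) (L : eqType)
  (mul : A -> A -> A) (e : L -> A) (omega : L -> L -> K)
  (hbil : bilinear_mul mul) (hnat : natural_basis mul e omega)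
  (J : A -> Prop) (hJ : is_ideal mul J) (hJ0 : exists x, J x /\ x != 0) :
  let X := fun i => suppS e J i \/ descS omega (suppS e J) i in
  let I1 := lin (fun i => mul (e i) (e i)) X in
  let I2 := lin e X in
  is_ideal mul I1 /\ is_ideal mul I2 /\
  (forall x, I1 x -> J x) /\ (forall x, J x -> I2 x) /\
  (forall s : seq L, uniq s -> (forall i, i \in s) ->
     \det (struct_mx omega s) != 0 ->
     forall x, (I1 x <-> J x) /\ (J x <-> I2 x)).
Proof.
move=> X I1 I2.
have [[Hb Hli] [Hne Hsq]] := hnat.
have [J0 [JD [JZ [JL JR]]]] := hJ.
have cJ : closedP J by split=> //; split.
have Xcl : forall i j, X i -> omega j i != 0 -> X j.
{ move=> i j [Si | [i0 [Si0 [n [n0 Dn]]]]] ji.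
  - by right; exists i; split => //; exists 1%N; split => //; exists i; split.
  - by right; exists i0; split => //; exists n.+1; split => //; exists i; split. }
have sqI2 : forall i, X i -> I2 (mul (e i) (e i)).
{ move=> i Xi; have [si [ui [Hi ->]]] := Hsq i.
  apply: lincomb_closed; first exact: lin_closed.
  move=> k _; apply: scale_gen; first exact: lin_closed.
  move=> /(Xcl _ _ Xi) Xk; exact: lin_gen. }
have I2id : is_ideal mul I2.
{ apply: ideal_of => // i j Xi.
  case: (eqVneq i j) => [<-|ij]; first by split; apply: sqI2.
  rewrite !Hne // 1?eq_sym //; split; exact: (lin_closed e X).1. }
have I1id : is_ideal mul I1.
{ apply: ideal_of => // i j Xi; rewrite (mul_sq_l hbil hnat) (mul_sq_r hbil hnat).
  suff : I1 (omega j i *: mul (e j) (e j)) by [].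
  apply: scale_gen; first exact: lin_closed.
  move=> /(Xcl _ _ Xi) Xj; exact: (lin_gen (fun i => mul (e i) (e i))). }
have Jsupp : forall i, suppS e J i -> J (mul (e i) (e i)).
{ move=> i [a [Ja [t [c [ut [Ea [it ci]]]]]]].
  have := JL _ (e i) Ja; rewrite Ea (mul_e_l hbil hnat) // it => H.
  by have := JZ (c i)^-1 _ H; rewrite scalerA mulVf // scale1r. }
have JX : forall i, X i -> J (mul (e i) (e i)).
{ move=> i [/Jsupp //|[i0 [Si0 [n [_ Dn]]]]].
  elim: n i Dn => [|n IH] j /=; first by move <-; exact: Jsupp.
  move=> [k [Dk kj]]; have := JL _ (e j) (IH _ Dk); rewrite (mul_sq_l hbil hnat) => H.
  by have := JZ (omega j k)^-1 _ H; rewrite scalerA mulVf // scale1r. }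
have I1J : forall x, I1 x -> J x.
{ move=> x [s [c [Hs ->]]]; apply: lincomb_closed => // i /Hs Xi.
  exact: JZ (JX _ Xi). }
have JI2 : forall x, J x -> I2 x.
{ move=> x Jx; have [t [c Ex]] := Hb x.
  have Ex' := Ex; rewrite lincomb_undup in Ex'.
  rewrite Ex'; apply: lincomb_closed; first exact: lin_closed.
  move=> i it; apply: scale_gen; first exact: lin_closed.
  move=> ci; apply: lin_gen; left; exists x; split => //.
  exists (undup t), (fun i => (count_mem i t)%:R * c i).
  by split; [exact: undup_uniq | split]. }
split => //; split => //; split => //; split => //.
move=> s us alls hdet.
have I2I1 : forall x, I2 x -> I1 x.
{ move=> x [t [c [Ht ->]]]; apply: lincomb_closed; first exact: lin_closed.
  move=> i /Ht Xi; apply: (lin_closed _ X).2.2.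
  exact: (key hnat Xcl us alls hdet Xi). }
move=> x; split; split.
- exact: I1J.
- by move/JI2/I2I1.
- exact: JI2.
- by move/I2I1/I1J.
Qed.
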